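(* Let $G=(V,E)$ be a directed graph with $n$ vertices, $m$ edges and oriented incidence matrix $D\in\mathbb{R}^{m\times n}$, and let $\bm{y}\in\mathbb{R}^{n}$ be a signal over its nodes. Let $\Delta$ be either $L=D^{T}D$ (general trend filtering) or the Kronecker matrix $K$ (Kronecker trend filtering, when $G$ is the grid graph of a lattice $\{1,\dots,N\}^k$). For penalisation parameters $\lambda_{NI},\lambda_{F},\lambda_{T}>0$ let $$\hat{\bm{\beta}}^{NITF}=\arg\min_{\bm{\beta}\in\mathbb{R}^{n}}\tfrac12\|\bm{y}-\bm{\beta}\|_2^2+\lambda_{NI}\|D\bm{\beta}\|_{+}+\lambda_{T}\|\Delta\bm{\beta}\|_1,$$ $$\hat{\bm{\beta}}^{FLTF}=\arg\min_{\bm{\beta}\in\mathbb{R}^{n}}\tfrac12\|\bm{y}-\bm{\beta}\|_2^2+\lambda_{F}\|D\bm{\beta}\|_1+\lambda_{T}\|\Delta\bm{\beta}\|_1.$$ Then for any such parameters $$\sum_{i=1}^{n}y_i=\sum_{i=1}^{n}\hat{\beta}^{NITF}_i=\sum_{i=1}^{n}\hat{\beta}^{FLTF}_i.$$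
   Context: The oriented incidence matrix $D\in\mathbb{R}^{m\times n}$ has $D_{i,j}=1$ if vertex $j$ is the source of edge $i$, $D_{i,j}=-1$ if vertex $j$ is the target of edge $i$, and $0$ otherwise. For $\bm{x}\in\mathbb{R}^m$, $\|\bm{x}\|_{+}=\sum_i\max(x_i,0)$. For the lattice $\{1,\dots,N\}^{k}$ (with edges between lattice neighbours differing by $1$ in one coordinate, oriented in the increasing direction), $D^{t}\in\mathbb{R}^{(N-2)\times N}$ is the second-difference matrix whose $i$-th row has entries $1,-2,1$ in columns $i,i+1,i+2$ and zeros elsewhere, and $K$ is the vertical stack of the $k$ blocks $I_N\otimes\cdots\otimes D^{t}\otimes\cdots\otimes I_N$ ($D^{t}$ in the $j$-th position, $j=1,\dots,k$), $\otimes$ the Kronecker product. *)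

(* Defs.v *)
From HB Require Import structures.
From mathcomp Require Import all_boot all_order all_algebra.
From mathcomp Require Import reals.
Set Implicit Arguments. Unset Strict Implicit. Unset Printing Implicit Defensive.
Import Order.TTheory GRing.Theory Num.Theory.
Local Open Scope ring_scope.

Definition incidence {R : pzRingType} (m n : nat) (src tgt : 'I_m -> 'I_n)
  : 'M[R]_(m, n) :=
  \matrix_(e < m, j < n) ((j == src e)%:R - (j == tgt e)%:R).

Definition norm1 {R : numDomainType} p (x : 'cV[R]_p) : R := \sum_(i < p) `|x i 0|.
Definition normplus {R : numDomainType} p (x : 'cV[R]_p) : R :=
  \sum_(i < p) Num.max (x i 0) 0.
Definition sqnorm2 {R : numDomainType} p (x : 'cV[R]_p) : R := \sum_(i < p) (x i 0) ^+ 2.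

(* entry of a matrix at natural-number indices (0 outside the range) *)
Definition mx_at {R : pzRingType} m n (A : 'M[R]_(m, n)) (i j : nat) : R :=
  match @insub _ (fun x => x < m)%N 'I_m i, @insub _ (fun x => x < n)%N 'I_n j with
  | Some i', Some j' => A i' j'
  | _, _ => 0
  end.

Definition kron {R : pzRingType} m1 n1 m2 n2 (A : 'M[R]_(m1, n1)) (B : 'M[R]_(m2, n2))
  : 'M[R]_(m1 * m2, n1 * n2) :=
  \matrix_(i < m1 * m2, j < n1 * n2)
    (mx_at A (i %/ m2) (j %/ n2) * mx_at B (i %% m2) (j %% n2)).

Definition secdiff {R : pzRingType} (N : nat) : 'M[R]_(N - 2, N) :=
  \matrix_(i < N - 2, j < N)
    (if j == i :> nat then 1 else if j == i.+1 :> nat then -2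
     else if j == i.+2 :> nat then 1 else 0).

Lemma kron_cols_eq (N k : nat) (j : 'I_k) : (N ^ j * N * N ^ (k - j.+1) = N ^ k)%N.
Proof.
by rewrite -expnSr -expnD subnKC // ltn_ord.
Qed.

(* the j-th block (0-indexed) I_{N^j} ⊗ D^t ⊗ I_{N^(k-1-j)}, i.e.
   I_N ⊗ ... ⊗ D^t ⊗ ... ⊗ I_N with D^t in position j+1 *)
Definition kron_block {R : pzRingType} (N k : nat) (j : 'I_k)
  : 'M[R]_(N ^ j * (N - 2) * N ^ (k - j.+1), N ^ k) :=
  castmx (erefl _, kron_cols_eq N j)
    (kron (kron (1%:M : 'M[R]_(N ^ j)) (secdiff N)) (1%:M : 'M[R]_(N ^ (k - j.+1)))).

Definition kronK {R : pzRingType} (N k : nat) :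
  'M[R]_(\sum_(j < k) (N ^ j * (N - 2) * N ^ (k - j.+1)), N ^ k) :=
  \mxcol_(j < k) kron_block N j.

(* Lattice {1,...,N}^k: vertex v < N^k has coordinate j (0-indexed, j = 0
   most significant, consistent with the Kronecker ordering) equal to
   (v %/ N^(k-1-j)) %% N.  (u, v) is a grid edge oriented in the increasing
   direction iff v is u with one coordinate increased by 1. *)
Definition coord (N k : nat) (j : nat) (v : nat) : nat := (v %/ N ^ (k - j.+1)) %% N.

Definition grid_edge (N k : nat) (u v : 'I_(N ^ k)) : Prop :=
  exists j : 'I_k, (coord N k j u < N.-1)%N /\ (v : nat) = (u + N ^ (k - j.+1))%N.

Definition is_grid_graph (N k m : nat) (src tgt : 'I_m -> 'I_(N ^ k)) : Prop :=
  (forall e, grid_edge (src e) (tgt e)) /\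
  (forall u v, grid_edge u v -> exists! e, src e = u /\ tgt e = v).

Definition obj_NITF {R : realType} n m p (D : 'M[R]_(m, n)) (Delta : 'M[R]_(p, n))
  (lamNI lamT : R) (y beta : 'cV[R]_n) : R :=
  2^-1 * sqnorm2 (y - beta) + lamNI * normplus (D *m beta) + lamT * norm1 (Delta *m beta).

Definition obj_FLTF {R : realType} n m p (D : 'M[R]_(m, n)) (Delta : 'M[R]_(p, n))
  (lamF lamT : R) (y beta : 'cV[R]_n) : R :=
  2^-1 * sqnorm2 (y - beta) + lamF * norm1 (D *m beta) + lamT * norm1 (Delta *m beta).

Definition is_argmin {R : realType} n (f : 'cV[R]_n -> R) (beta : 'cV[R]_n) : Prop :=
  forall b, f beta <= f b.

(* Main.v *)
Require Import Defs.
From HB Require Import structures.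
From mathcomp Require Import all_boot all_order all_algebra.
From mathcomp Require Import reals.
From mathcomp Require Import ring lra zify.
Import Order.TTheory GRing.Theory Num.Theory.
Local Open Scope ring_scope.

Section S.
Variable R : realType.

Lemma quad_lemma n (a : 'cV[R]_n) :
  (forall c, sqnorm2 a <= sqnorm2 (a - const_mx c)) -> \sum_(i < n) a i 0 = 0.
Proof.
case: n a => [|n] a H; first by rewrite big_ord0.
set s := \sum_(i < n.+1) a i 0.
have E c : sqnorm2 (a - const_mx c) = sqnorm2 a - 2 * c * s + (n.+1)%:R * c ^+ 2.
  rewrite /sqnorm2 /s.
  transitivity (\sum_(i < n.+1) (a i 0 ^+ 2 + (- (2 * c * a i 0)) + c ^+ 2)).
    by apply: eq_bigr => i _; rewrite !mxE; ring.
  rewrite !big_split /= sumrN -mulr_sumr sumr_const card_ord -mulr_natl; ring.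
have nr : 0 < (n.+1)%:R :> R by rewrite ltr0n.
have := H (s / (n.+1)%:R); rewrite E => H1.
have E2 : (n.+1)%:R * (s / (n.+1)%:R) = s by rewrite mulrC divfK // gt_eqF.
move: H1 E2; set c := s / _; set nn := (n.+1)%:R => H1 E2.
have h1 : c * s <= 0 by nra.
have h2 : s * s <= 0 by nra.
nra.
Qed.

Lemma rows0 m n (M : 'M[R]_(m, n)) :
  (forall i, \sum_j M i j = 0) -> M *m (const_mx 1 : 'cV[R]_n) = 0.
Proof.
move=> H; apply/matrixP => i j; rewrite !mxE -[RHS](H i).
by apply: eq_bigr => l _; rewrite mxE mulr1.
Qed.

Lemma ind_sum_ord n (s : 'I_n) : \sum_(j < n) ((j == s)%:R : R) = 1.
Proof.
rewrite (bigD1 s) //= eqxx big1 ?addr0 // => j /negbTE -> //.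
Qed.

Lemma ind_sum_nat n c : (c < n)%N -> \sum_(j < n) ((j == c :> nat)%:R : R) = 1.
Proof.
move=> hc; transitivity (\sum_(j < n) ((j == Ordinal hc)%:R : R)); last exact: ind_sum_ord.
by apply: eq_bigr.
Qed.

Lemma incidence0 m n (src tgt : 'I_m -> 'I_n) :
  incidence (R := R) src tgt *m (const_mx 1 : 'cV[R]_n) = 0.
Proof.
apply: rows0 => e; under eq_bigr do rewrite mxE.
rewrite sumrB. have h1 := @ind_sum_ord n (src e). have h2 := @ind_sum_ord n (tgt e). by rewrite h1 h2 subrr.
Qed.


Lemma mx_at_rows0 m n (A : 'M[R]_(m, n)) :
  (forall i, \sum_j A i j = 0) -> forall r, \sum_(a < n) mx_at A r a = 0.
Proof.
move=> H r; rewrite /mx_at; case: insubP => [i' _ _|_]; last by rewrite big1.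
transitivity (\sum_j A i' j); last exact: H. by apply: eq_bigr => a _; rewrite valK.
Qed.

Lemma sum_divmod n1 n2 (F : nat -> nat -> R) :
  \sum_(j < n1 * n2) F (j %/ n2)%N (j %% n2)%N = \sum_(a < n1) \sum_(b < n2) F a b.
Proof.
rewrite -(big_mkord xpredT (fun j => F (j %/ n2)%N (j %% n2)%N)) big_nat_mul big_mkord.
apply: eq_bigr => a _.
rewrite -{1}[(a * n2)%N]add0n big_addn mulSn.
have -> : (n2 + a * n2 - a * n2 = n2)%N by rewrite addnK.
rewrite big_mkord.
apply: eq_bigr => b _.
have hb := ltn_ord b.
have n2p : (0 < n2)%N by apply: leq_ltn_trans hb.
by rewrite addnC divnMDl // modnMDl divn_small // modn_small // addn0.
Qed.

Lemma kron_rowsum m1 n1 m2 n2 (A : 'M[R]_(m1, n1)) (B : 'M[R]_(m2, n2)) i :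
  \sum_j kron A B i j =
  (\sum_(a < n1) mx_at A (i %/ m2)%N a) * (\sum_(b < n2) mx_at B (i %% m2)%N b).
Proof.
under eq_bigr do rewrite mxE.
rewrite (@sum_divmod n1 n2 (fun a b => mx_at A (i %/ m2)%N a * mx_at B (i %% m2)%N b)).
rewrite mulr_suml; apply: eq_bigr => a _; by rewrite mulr_sumr.
Qed.

Lemma secdiff_rows N (i : 'I_(N - 2)) : \sum_j secdiff (R := R) N i j = 0.
Proof.
have hi := ltn_ord i.
transitivity (\sum_(j < N) (((j == i :> nat)%:R + - (2 * (j == i.+1 :> nat)%:R)
   + (j == i.+2 :> nat)%:R) : R)).
  apply: eq_bigr => j _; rewrite mxE.
  case: (eqVneq (j:nat) i) => [e1|n1]; case: (eqVneq (j:nat) i.+1) => [e2|n2];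
  case: (eqVneq (j:nat) i.+2) => [e3|n3] //=; try lia; ring.
rewrite !big_split /= sumrN -mulr_sumr !ind_sum_nat; try lia.
ring.
Qed.

Lemma cast_cols p q q' (e : q = q') (M : 'M[R]_(p, q)) :
  M *m (const_mx 1 : 'cV[R]_q) = 0 ->
  castmx (erefl p, e) M *m (const_mx 1 : 'cV[R]_q') = 0.
Proof. by case: q' / e; rewrite castmx_id. Qed.

Lemma kron_block0 N k (j : 'I_k) :
  kron_block (R := R) N j *m (const_mx 1 : 'cV[R]_(N ^ k)) = 0.
Proof.
rewrite /kron_block; apply: cast_cols; apply: rows0 => i.
rewrite kron_rowsum (@mx_at_rows0 _ _ _ _) ?mul0r // => r.
by rewrite kron_rowsum (@mx_at_rows0 _ _ _ (@secdiff_rows N)) mulr0.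
Qed.

Lemma kronK0 N k : kronK (R := R) N k *m (const_mx 1 : 'cV[R]_(N ^ k)) = 0.
Proof.
rewrite /kronK mxcol_mul -mxcol0.
apply: eq_mxcol => j; exact: kron_block0.
Qed.

Lemma key n m p (D : 'M[R]_(m, n)) (Delta : 'M[R]_(p, n)) (P : 'cV[R]_m -> R)
   lam lamT (y b : 'cV[R]_n) :
  D *m (const_mx 1 : 'cV[R]_n) = 0 -> Delta *m (const_mx 1 : 'cV[R]_n) = 0 ->
  (forall b', 2^-1 * sqnorm2 (y - b) + lam * P (D *m b) + lamT * norm1 (Delta *m b)
    <= 2^-1 * sqnorm2 (y - b') + lam * P (D *m b') + lamT * norm1 (Delta *m b')) ->
  \sum_(i < n) y i 0 = \sum_(i < n) b i 0.
Proof.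
move=> hD hDe H; apply/eqP; rewrite -subr_eq0 -sumrB; apply/eqP.
have -> : \sum_(i < n) (y i 0 - b i 0) = \sum_(i < n) (y - b) i 0.
  by apply: eq_bigr => i _; rewrite !mxE.
apply: quad_lemma => c.
have sh (M : 'M[R]_(_, n)) : M *m (const_mx 1 : 'cV[R]_n) = 0 -> M *m (b + const_mx c) = M *m b.
  move=> hM; have -> : (const_mx c : 'cV[R]_n) = c *: const_mx 1.
    by apply/matrixP => i j; rewrite !mxE mulr1.
  by rewrite mulmxDr -scalemxAr hM scaler0 addr0.
have := H (b + const_mx c); rewrite (sh _ _ hD) (sh _ _ hDe).
have -> : y - (b + const_mx c) = y - b - const_mx c by rewrite opprD addrA.
rewrite lerD2r lerD2r ler_pM2l //.
by rewrite invr_gt0 ltr0n.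
Qed.
End S.

Theorem theorem2p4 (R : realType) :
  (* general trend filtering: Delta = L = D^T D *)
  (forall (n m : nat) (src tgt : 'I_m -> 'I_n),
     (forall e, src e != tgt e) ->
     forall (y : 'cV[R]_n) (lamNI lamF lamT : R),
     0 < lamNI -> 0 < lamF -> 0 < lamT ->
     let D := incidence (R := R) src tgt in
     let Delta := D^T *m D in
     forall bNI bF : 'cV[R]_n,
       is_argmin (obj_NITF D Delta lamNI lamT y) bNI ->
       is_argmin (obj_FLTF D Delta lamF lamT y) bF ->
       \sum_(i < n) y i 0 = \sum_(i < n) bNI i 0 /\
       \sum_(i < n) y i 0 = \sum_(i < n) bF i 0)
  /\
  (* Kronecker trend filtering on the grid graph of {1,...,N}^k: Delta = K *)
  (forall (N k m : nat) (src tgt : 'I_m -> 'I_(N ^ k)),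
     is_grid_graph src tgt ->
     forall (y : 'cV[R]_(N ^ k)) (lamNI lamF lamT : R),
     0 < lamNI -> 0 < lamF -> 0 < lamT ->
     let D := incidence (R := R) src tgt in
     let Delta := kronK (R := R) N k in
     forall bNI bF : 'cV[R]_(N ^ k),
       is_argmin (obj_NITF D Delta lamNI lamT y) bNI ->
       is_argmin (obj_FLTF D Delta lamF lamT y) bF ->
       \sum_(i < N ^ k) y i 0 = \sum_(i < N ^ k) bNI i 0 /\
       \sum_(i < N ^ k) y i 0 = \sum_(i < N ^ k) bF i 0).
Proof.
split.
- move=> n m src tgt _ y lamNI lamF lamT _ _ _ D Delta bNI bF HNI HF.
  have h1 : D *m (const_mx 1 : 'cV[R]_n) = 0 by exact: incidence0.
  have h2 : Delta *m (const_mx 1 : 'cV[R]_n) = 0 by rewrite /Delta -mulmxA h1 mulmx0.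
  split; [exact: (@key R _ _ _ _ _ (@normplus R m) _ _ _ _ h1 h2 HNI) | exact: (@key R _ _ _ _ _ (@norm1 R m) _ _ _ _ h1 h2 HF)].
- move=> N k m src tgt _ y lamNI lamF lamT _ _ _ D Delta bNI bF HNI HF.
  have h1 : D *m (const_mx 1 : 'cV[R]_(N ^ k)) = 0 by exact: incidence0.
  have h2 : Delta *m (const_mx 1 : 'cV[R]_(N ^ k)) = 0 by exact: kronK0.
  split; [exact: (@key R _ _ _ _ _ (@normplus R m) _ _ _ _ h1 h2 HNI) | exact: (@key R _ _ _ _ _ (@norm1 R m) _ _ _ _ h1 h2 HF)].
Qed.
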